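(* Let $(W,S)$ be a finite Coxeter system with Poincaré polynomial $P(q)=\sum_{w\in W}q^{\ell(w)}$ and identity $e$, and for $w\in W$ let $g_w(q)=\sum_{\chi\in\operatorname{Irr}(W)}\chi(w)\,d_\chi(q)$, where $d_\chi(q)$ are the generic degrees of $W$. Then $g_e(q)=P(q)$, and $g_s(q)=(1-q)P(q)/(1+q)$ for every $s\in S$.
   Context: Let $W$ be a finite Coxeter group with set of distinguished generators $S$, length function $\ell(\cdot)$, identity $e$, and set of irreducible complex characters $\operatorname{Irr}(W)$. Let $K\subseteq\mathbb{C}$ be a splitting field for $W$, $q$ an indeterminate, and $\mathcal{H}$ the Hecke algebra of $W$ over $K(\sqrt q)$ with basis $T_w$ ($w\in W$) and relations $T_s^2=qT_e+(q-1)T_s$ for $s\in S$, and $T_xT_y=T_{xy}$ whenever $\ell(x)+\ell(y)=\ell(xy)$. $\mathcal{H}$ is split semisimple; each irreducible character $\tilde\chi$ of $\mathcal{H}$ satisfies $\tilde\chi(T_w)\in K[\sqrt q]$, and specializing $\sqrt q\mapsto 1$ in $\tilde\chi(T_w)$ gives $\chi(w)$ for a unique $\chi\in\operatorname{Irr}(W)$, giving a bijection $\chi\leftrightarrow\tilde\chi$. The generic degrees $d_\chi(q)$, $\chi\in\operatorname{Irr}(W)$, are the unique elements satisfying $\sum_{\chi\in\operatorname{Irr}(W)}\tilde\chi(T_w)d_\chi(q)=P(q)$ if $w=e$ and $=0$ if $w\neq e$. *)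

(* Defs.v *)
From HB Require Import structures.
From mathcomp Require Import all_boot all_order all_algebra all_fingroup all_solvable all_field all_character.
Set Implicit Arguments. Unset Strict Implicit. Unset Printing Implicit Defensive.
Import Order.TTheory GRing.Theory Num.Theory.
Local Open Scope ring_scope.

(* K = algC (an algebraically closed subfield of C, hence a
   splitting field for W).  sqrt q is the indeterminate 'X of {poly algC};
   the field K(sqrt q) is {fraction {poly algC}}. *)

Definition Lq : fieldType := {fraction {poly algC}}.

Definition toL (p : {poly algC}) : Lq := FracField.tofrac p.

Definition cst (c : algC) : Lq := toL (c%:P).

Definition qL : Lq := toL ('X ^+ 2)%R.

(* Coxeter system (W,S): S a set of involutions generating W, satisfying the
   universal property of the Coxeter presentation  <S | (st)^{m(s,t)} = 1>
   with m(s,t) = order of st in W, tested against all finite groups. *)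
Definition coxeter_system (gT : finGroupType) (W : {group gT}) (S : {set gT}) : Prop :=
  [/\ S \subset W, (1%g \notin S),
      (forall s, s \in S -> (s * s)%g = 1%g),
      <<S>>%g = W &
      forall (hT : finGroupType) (f : gT -> hT),
        (forall s t, s \in S -> t \in S -> ((f s * f t) ^+ #[(s * t)%g])%g = 1%g) ->
        exists phi : {morphism W >-> hT}, forall s, s \in S -> phi s = f s].

(* length function w.r.t. S: least n such that w is a product of n elements
   of S (every element of W = <<S>> has a reduced word of length < #|gT|). *)
Definition coxlen (gT : finGroupType) (S : {set gT}) (w : gT) : nat :=
  find (fun n => [exists t : n.-tuple gT,
                   all (mem S) t && ((\prod_(s <- t) s)%g == w)])
       (iota 0 #|gT|.+1).

Definition poincare (gT : finGroupType) (W : {group gT}) (S : {set gT}) : Lq :=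
  (\sum_(w in W) qL ^+ coxlen S w)%R.

(* A (unital, matrix) representation of the Hecke algebra H over K(sqrt q):
   rho w is the image of T_w.  Since (T_w) is a basis of H, an algebra
   homomorphism H -> M_n(L) is exactly such a family satisfying the
   defining relations. *)
Definition hecke_rep (gT : finGroupType) (W : {group gT}) (S : {set gT})
    (n : nat) (rho : gT -> 'M[Lq]_n) : Prop :=
  [/\ rho 1%g = 1%:M,
      (forall s, s \in S -> rho s *m rho s = qL *: 1%:M + (qL - 1) *: rho s)%R &
      (forall x y, x \in W -> y \in W ->
         coxlen S x + coxlen S y = coxlen S (x * y)%g ->
         rho x *m rho y = rho (x * y)%g)].

Definition hecke_irr (gT : finGroupType) (W : {group gT})
    (n : nat) (rho : gT -> 'M[Lq]_n) : Prop :=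
  (0 < n)%N /\
  forall U : 'M[Lq]_n, (forall w, w \in W -> (U *m rho w <= U)%MS) ->
     U = 0 \/ row_full U.

(* Main.v *)
Require Import Defs.
From HB Require Import structures.
From mathcomp Require Import all_boot all_order all_algebra all_fingroup all_solvable all_field all_character.
From mathcomp Require Import ring.
Import Order.TTheory GRing.Theory Num.Theory.
Local Open Scope ring_scope.

Lemma tr_idem (F : fieldType) n (E : 'M[F]_n) : E *m E = E -> \tr E = (\rank E)%:R.
Proof.
move=> EE.
have RC : row_base E *m col_base E = 1%:M.
  apply: (row_free_inj (row_base_free E)).
  apply: (row_full_inj (col_base_full E)).
  have B := mulmx_base E.
  move: (col_base E) (row_base E) B => C R B.
  by rewrite mul1mx !mulmxA B -mulmxA B.
by rewrite -{1}(mulmx_base E) mxtrace_mulC RC mxtrace1.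
Qed.

Lemma tr_quad (F : fieldType) n (A : 'M[F]_n) (q : F) :
  A *m A = q *: 1%:M + (q - 1) *: A -> 1 + q != 0 ->
  exists r : nat, \tr A = (1 + q) * r%:R - n%:R.
Proof.
move=> AA q0.
have BB : (A + 1%:M) *m (A + 1%:M) = (1 + q) *: (A + 1%:M).
  rewrite mulmxDl !mulmxDr AA mul1mx !mulmx1.
  rewrite scalerBl scale1r scalerDl scale1r scalerDr.
  rewrite [q *: 1%:M + (q *: A - A)]addrA subrK [LHS]addrC; congr (_ + _); rewrite addrC.
  done.
set E := (1 + q)^-1 *: (A + 1%:M).
have EE : E *m E = E.
  by rewrite /E -scalemxAl -scalemxAr BB !scalerA -mulrA mulVf // mulr1.
exists (\rank E).
rewrite -tr_idem // /E mxtraceZ mulrA mulfV // mul1r mxtraceD mxtrace1.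
by rewrite addrK.
Qed.

Lemma toL_inj (p r : {poly algC}) : toL p = toL r -> p = r.
Proof. by move=> h; apply/eqP; rewrite -tofrac_eq; apply/eqP. Qed.

Lemma q1_neq0 : 1 + qL != 0.
Proof.
have -> : 1 + qL = toL (1 + 'X^2) by rewrite /qL /toL rmorphD rmorph1.
rewrite /toL tofrac_eq0; apply/negP => /eqP h.
have := congr1 (fun p => p.[0]) h; rewrite !hornerE /= => /eqP.
by rewrite expr0n /= addr0 oner_eq0.
Qed.

Theorem corollary1p2 (gT : finGroupType) (W : {group gT}) (S : {set gT})
  (n : Iirr W -> nat) (rho : forall i : Iirr W, gT -> 'M[Lq]_(n i))
  (d : Iirr W -> Lq) :
  coxeter_system W S ->
  (* the irreducible representations of H, indexed by Irr(W) via specialization *)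
  (forall i, hecke_rep W S (rho i)) ->
  (forall i, hecke_irr W (rho i)) ->
  (forall i w, w \in W -> exists p : {poly algC},
      \tr (rho i w) = toL p /\ p.[1] = 'chi[W]_i w)%R ->
  (* d are the generic degrees *)
  (forall w, w \in W ->
     (\sum_i \tr (rho i w) * d i)%R = (if w == 1%g then poincare W S else 0%R)) ->
  (\sum_i cst ('chi[W]_i 1%g) * d i)%R = poincare W S /\
  (forall s, s \in S ->
     (\sum_i cst ('chi[W]_i s) * d i)%R = ((1 - qL) * poincare W S / (1 + qL))%R).
Proof.
move=> [SW S1 _ _ _] Hrep _ Hspec Hgd.
have tr1 i : \tr (rho i 1%g) = (n i)%:R.
  by case: (Hrep i) => -> _ _; rewrite mxtrace1.
have chi1 i : cst ('chi[W]_i 1%g) = (n i)%:R.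
  have [p [hp hp1]] := Hspec i 1%g (group1 W).
  rewrite tr1 in hp.
  have : p = (n i)%:R by apply: toL_inj; rewrite -hp /toL rmorph_nat.
  move=> ep; rewrite -hp1 ep hornerMn hornerC /cst /toL.
  by rewrite !rmorph_nat.
have HP : \sum_i (n i)%:R * d i = poincare W S.
  have := Hgd 1%g (group1 W); rewrite eqxx => <-; by under [RHS]eq_bigr do rewrite tr1.
split.
  by rewrite -HP; apply: eq_bigr => i _; rewrite chi1.
move=> s sS.
have sW : s \in W by apply: (subsetP SW).
have s1 : (s == 1%g) = false by apply/negbTE; apply/eqP => e; move: S1; rewrite -e sS.
have key i : 2%:R * \tr (rho i s) =
    (1 + qL) * (cst ('chi[W]_i s) + (n i)%:R) - 2%:R * (n i)%:R.
  have [r hr] : exists r : nat, \tr (rho i s) = (1 + qL) * r%:R - (n i)%:R.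
    apply: tr_quad; last exact: q1_neq0.
    by case: (Hrep i) => _ h _; apply: h.
  have [p [hp hp1]] := Hspec i s sW.
  have ep : p = (1 + 'X^2) * r%:R - (n i)%:R.
    apply: toL_inj; rewrite -hp hr /qL /toL.
    by rewrite !(rmorphB, rmorphM, rmorphD, rmorph1, rmorph_nat, rmorphXn).
  have ec : 'chi[W]_i s = (1 + 1) * r%:R - (n i)%:R.
    by rewrite -hp1 ep !hornerE !hornerMn !hornerC expr1n.
  rewrite hr ec /cst /toL !rmorphB !rmorphM !rmorphD !rmorph1 !rmorph_nat.
  ring.
have H0 := Hgd s sW; rewrite s1 in H0.
have H2 : \sum_i (2%:R * \tr (rho i s)) * d i = 0.
  by rewrite -[RHS](mulr0 2%:R) -[in RHS]H0 mulr_sumr; apply: eq_bigr => i _; rewrite mulrA.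
have H3 : \sum_i (2%:R * \tr (rho i s)) * d i =
   (1 + qL) * \sum_i cst ('chi[W]_i s) * d i + (qL - 1) * \sum_i (n i)%:R * d i.
  rewrite !mulr_sumr -big_split; apply: eq_bigr => j _ /=; rewrite key; ring.
rewrite HP in H3; rewrite H3 in H2.
have q0 := q1_neq0.
apply: (mulfI q0).
rewrite [RHS]mulrC divfK //.
apply/eqP; rewrite -subr_eq0; apply/eqP; rewrite -[RHS]H2; ring.
Qed.
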